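(* Let $M,M'$ be positive integers, $L_1\ge2$, $L_2\ge1$, and let $\Gamma_{1,1},\dots,\Gamma_{1,L_1},\Gamma_{2,1},\dots,\Gamma_{2,L_2}$ be pairwise co-prime positive integers with $\Gamma_{1,1}=\dot\Gamma_{1,1}M'$ for some integer $\dot\Gamma_{1,1}$. Consider the moduli $M_i=M\Gamma_{1,i}$ for $1\le i\le L_1$ and $M_{L_1+i}=MM'\Gamma_{2,i}$ for $1\le i\le L_2$. Let $N$ be an integer with $0\le N<\operatorname{lcm}(M_1,\dots,M_{L_1+L_2})$, let $r_i$ be the remainder of $N$ modulo $M_i$, $n_i=(N-r_i)/M_i$, and let $\tilde r_i$ be integers with $0\le\tilde r_i\le M_i-1$ and $|\tilde r_i-r_i|\le\tau_i$, where $$\tau_1<M/4,\qquad \tau_i\le M/4\ (2\le i\le L_1),\qquad \tau_i\le MM'/2-M/4\ (L_1+1\le i\le L_1+L_2).$$ Then the single-stage algorithm (described in the context) run on $M_1,\dots,M_{L_1+L_2}$ with reference index $1$ and inputs $\tilde r_i$ outputs $\hat n_i=n_i$ for all $1\le i\le L_1+L_2$.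
   Context: For $x\in\mathbb R$, $[x]$ denotes the unique integer with $-1/2\le x-[x]<1/2$. Single-stage algorithm: let $P_1,\dots,P_m$ ($m\ge2$) be pairwise distinct positive integers, $k\in\{1,\dots,m\}$ a reference index, and $x_1,\dots,x_m$ integers. For each $i\ne k$ put $m_{ki}=\gcd(P_k,P_i)$, $\Gamma_{ki}=P_k/m_{ki}$, $\Gamma_{ik}=P_i/m_{ki}$, $\hat q_{ik}=[(x_i-x_k)/m_{ki}]$; let $\bar\Gamma_{ki}$ be a multiplicative inverse of $\Gamma_{ki}$ modulo $\Gamma_{ik}$, and let $\hat\xi_{ik}\in\{0,\dots,\Gamma_{ik}-1\}$ with $\hat\xi_{ik}\equiv\hat q_{ik}\bar\Gamma_{ki}\pmod{\Gamma_{ik}}$. Let $\hat n_k$ be the least nonnegative integer $y$ with $y\equiv\hat\xi_{ik}\pmod{\Gamma_{ik}}$ for all $i\ne k$ (if no such $y$ exists the algorithm fails). For $i\ne k$ set $\hat n_i=(\hat n_k\Gamma_{ki}-\hat q_{ik})/\Gamma_{ik}$. Outputs: $\hat n_1,\dots,\hat n_m$ and the estimate $[\frac1m\sum_{i=1}^m(\hat n_iP_i+x_i)]$. *)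

(* Defs.v *)
From Stdlib Require Import ZArith Reals List.
Open Scope Z_scope.

(* [x] = the unique integer z with -1/2 <= x - z < 1/2,
   i.e. x - 1/2 < z <= x + 1/2, i.e. z = up (x - 1/2)
   (Stdlib: up y is the unique integer with y < up y <= y + 1). *)
Definition nround (x : R) : Z := up (x - / 2)%R.

Definition mgcd (P : nat -> Z) (a b : nat) : Z := Z.gcd (P a) (P b).
Definition Gam (P : nat -> Z) (a b : nat) : Z := P a / mgcd P a b.
Definition qhat (P x : nat -> Z) (i k : nat) : Z :=
  nround (IZR (x i - x k) / IZR (mgcd P k i))%R.
(* xihat_{ik} in {0,..,Gamma_ik - 1}, congruent to qhat_{ik} * Gbar_{ki} mod Gamma_ik;
   Gbar i stands for the chosen inverse Gbar_{ki}. *)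
Definition xihat (P x Gbar : nat -> Z) (i k : nat) : Z :=
  (qhat P x i k * Gbar i) mod Gam P i k.

Definition valid_inverses (m k : nat) (P Gbar : nat -> Z) : Prop :=
  forall i, (1 <= i <= m)%nat -> i <> k ->
    (Gam P i k | Gam P k i * Gbar i - 1).

(* nh is the output (nhat_1,...,nhat_m) of the single-stage algorithm
   (which in particular does not fail) for the given choice Gbar of inverses. *)
Definition single_stage_output (m k : nat) (P x Gbar nh : nat -> Z) : Prop :=
  (0 <= nh k
   /\ (forall i, (1 <= i <= m)%nat -> i <> k -> (Gam P i k | nh k - xihat P x Gbar i k))
   /\ (forall y, 0 <= y ->
         (forall i, (1 <= i <= m)%nat -> i <> k -> (Gam P i k | y - xihat P x Gbar i k)) ->
         nh k <= y))
  /\ (forall i, (1 <= i <= m)%nat -> i <> k ->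
        nh i = (nh k * Gam P k i - qhat P x i k) / Gam P i k).

Definition lcm_upto (P : nat -> Z) (m : nat) : Z :=
  fold_left Z.lcm (map P (seq 1 m)) 1.

Definition Gall (L1 : nat) (G1 G2 : nat -> Z) (j : nat) : Z :=
  if (j <=? L1)%nat then G1 j else G2 (j - L1)%nat.

Definition Mods (M M' : Z) (L1 : nat) (G1 G2 : nat -> Z) (j : nat) : Z :=
  if (j <=? L1)%nat then M * G1 j else M * M' * G2 (j - L1)%nat.

(* Main.v *)
Require Import Defs.
From Stdlib Require Import ZArith Reals List Lia Lra.
Open Scope Z_scope.

Lemma round_lem (q a g : Z) : 0 < g -> (Rabs (IZR a) < IZR g / 2)%R ->
  nround (IZR (g*q + a) / IZR g) = q.
Proof.
  intros Hg Ha. unfold nround. symmetry. apply tech_up.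
  - assert (Hg' : (0 < IZR g)%R) by (apply IZR_lt; lia).
    rewrite plus_IZR, mult_IZR.
    set (t := (IZR a / IZR g)%R).
    assert (E : ((IZR g * IZR q + IZR a) / IZR g = IZR q + t)%R) by (unfold t; field; lra).
    rewrite E. assert (IZR a = t * IZR g)%R by (unfold t; field; lra).
    apply Rabs_def2 in Ha. nra.
  - assert (Hg' : (0 < IZR g)%R) by (apply IZR_lt; lia).
    rewrite plus_IZR, mult_IZR.
    set (t := (IZR a / IZR g)%R).
    assert (E : ((IZR g * IZR q + IZR a) / IZR g = IZR q + t)%R) by (unfold t; field; lra).
    rewrite E. assert (IZR a = t * IZR g)%R by (unfold t; field; lra).
    apply Rabs_def2 in Ha. nra.
Qed.

Lemma gam_facts a b : 0 < a -> 0 < b ->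
  0 < Z.gcd a b /\ a = (a / Z.gcd a b) * Z.gcd a b /\ 0 < a / Z.gcd a b.
Proof.
  intros Ha Hb.
  assert (Hg0 : 0 <= Z.gcd a b) by apply Z.gcd_nonneg.
  destruct (Z.gcd_divide_l a b) as [c Hc].
  assert (Hg : 0 < Z.gcd a b) by (destruct (Z.eq_dec (Z.gcd a b) 0); [rewrite e in Hc; lia| lia]).
  assert (Hc0 : 0 < c) by nia. replace (a / Z.gcd a b) with c by (rewrite Hc at 1; rewrite Z.div_mul by lia; reflexivity). split; [lia|split; [lia|lia]].
Qed.

Lemma fold_lcm_dvd (l : list Z) (a X : Z) : (a | X) -> (forall z, In z l -> (z | X)) ->
  (fold_left Z.lcm l a | X).
Proof.
  revert a; induction l as [|z l IH]; intros a Ha Hl; simpl; auto.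
  apply IH. apply Z.lcm_least; auto. apply Hl; simpl; auto.
  intros w Hw; apply Hl; simpl; auto.
Qed.

Lemma lcm_upto_dvd P m X : (forall j, (1 <= j <= m)%nat -> (P j | X)) -> (lcm_upto P m | X).
Proof.
  intros H. unfold lcm_upto. apply fold_lcm_dvd. apply Z.divide_1_l.
  intros z Hz. apply in_map_iff in Hz as [j [<- Hj]]. apply in_seq in Hj. apply H; lia.
Qed.

Lemma one_index (P1 Pi N x1 xi : Z):
 0 < P1 -> 0 < Pi ->
 (Rabs (IZR (xi - N mod Pi)) + Rabs (IZR (x1 - N mod P1)) < IZR (Z.gcd P1 Pi) / 2)%R ->
 nround (IZR (xi - x1) / IZR (Z.gcd P1 Pi)) =
   (N/P1)*(P1/Z.gcd P1 Pi) - (N/Pi)*(Pi/Z.gcd Pi P1).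
Proof.
  intros H1 Hi HR.
  rewrite (Z.gcd_comm Pi P1).
  destruct (gam_facts P1 Pi H1 Hi) as [Hg [E1 _]].
  destruct (gam_facts Pi P1 Hi H1) as [_ [Ei _]]. rewrite Z.gcd_comm in Ei.
  set (g := Z.gcd P1 Pi) in *.
  set (c1 := P1 / g) in *. set (ci := Pi / g) in *.
  set (a := (xi - N mod Pi) - (x1 - N mod P1)).
  assert (Ex : xi - x1 = g * ((N/P1)*c1 - (N/Pi)*ci) + a).
  { unfold a. rewrite !Z.mod_eq by lia. rewrite E1 at 2. rewrite Ei at 2. ring. }
  rewrite Ex. apply round_lem; auto.
  eapply Rle_lt_trans; [|exact HR]. unfold a. rewrite minus_IZR.
  pose proof (Rabs_triang (IZR (xi - N mod Pi)) (- IZR (x1 - N mod P1))) as T.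
  rewrite Rabs_Ropp in T. exact T.
Qed.
Theorem corollary4 (M M' : Z) (L1 L2 : nat) (G1 G2 : nat -> Z) (Gd11 N : Z)
  (rt : nat -> Z) (tau : nat -> R) :
  0 < M -> 0 < M' -> (2 <= L1)%nat -> (1 <= L2)%nat ->
  (forall i, (1 <= i <= L1)%nat -> 0 < G1 i) ->
  (forall i, (1 <= i <= L2)%nat -> 0 < G2 i) ->
  (forall i j, (1 <= i <= L1 + L2)%nat -> (1 <= j <= L1 + L2)%nat -> i <> j ->
     Z.gcd (Gall L1 G1 G2 i) (Gall L1 G1 G2 j) = 1) ->
  G1 1%nat = Gd11 * M' ->
  0 <= N < lcm_upto (Mods M M' L1 G1 G2) (L1 + L2) ->
  (forall i, (1 <= i <= L1 + L2)%nat -> 0 <= rt i <= Mods M M' L1 G1 G2 i - 1) ->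
  (forall i, (1 <= i <= L1 + L2)%nat ->
     (Rabs (IZR (rt i - N mod Mods M M' L1 G1 G2 i)) <= tau i)%R) ->
  (tau 1%nat < IZR M / 4)%R ->
  (forall i, (2 <= i <= L1)%nat -> (tau i <= IZR M / 4)%R) ->
  (forall i, (L1 + 1 <= i <= L1 + L2)%nat ->
     (tau i <= IZR M * IZR M' / 2 - IZR M / 4)%R) ->
  forall Gbar : nat -> Z,
    valid_inverses (L1 + L2) 1 (Mods M M' L1 G1 G2) Gbar ->
    single_stage_output (L1 + L2) 1 (Mods M M' L1 G1 G2) rt Gbar
      (fun j => (N - N mod Mods M M' L1 G1 G2 j) / Mods M M' L1 G1 G2 j).
Proof.
  intros HM HM' HL1 HL2 HG1 HG2 _ HGd HN _ Htau Ht1 Ht2 Ht3 Gbar Hinv.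
  set (P := Mods M M' L1 G1 G2) in *.
  assert (HP1 : P 1%nat = M * G1 1%nat).
  { unfold P, Mods. replace (1 <=? L1)%nat with true by (symmetry; apply Nat.leb_le; lia). auto. }
  assert (HP : forall j, (1 <= j <= L1 + L2)%nat -> 0 < P j).
  { intros j Hj. unfold P, Mods. destruct (j <=? L1)%nat eqn:E.
    - apply Nat.leb_le in E. specialize (HG1 j ltac:(lia)). nia.
    - apply Nat.leb_gt in E. specialize (HG2 (j - L1)%nat ltac:(lia)). nia. }
  assert (HMd : forall j, (1 <= j <= L1 + L2)%nat -> (M | P j)).
  { intros j Hj. unfold P, Mods. destruct (j <=? L1)%nat.
    - exists (G1 j); ring.
    - exists (M' * G2 (j - L1)%nat); ring. }
  assert (HMd2 : forall j, (L1 < j)%nat -> (M * M' | P j)).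
  { intros j Hj. unfold P, Mods. replace (j <=? L1)%nat with false by (symmetry; apply Nat.leb_gt; lia).
    exists (G2 (j - L1)%nat); ring. }
  assert (HMd1 : (M * M' | P 1%nat)).
  { rewrite HP1, HGd. exists Gd11; ring. }
  assert (Hnh : forall j, (1 <= j <= L1 + L2)%nat -> (N - N mod P j) / P j = N / P j).
  { intros j Hj. specialize (HP j Hj). rewrite Z.mod_eq by lia.
    replace (N - (N - P j * (N / P j))) with (N / P j * P j) by ring.
    apply Z.div_mul; lia. }
  assert (HP1p : 0 < P 1%nat) by (apply HP; lia).
  assert (Htau1 : (Rabs (IZR (rt 1%nat - N mod P 1%nat)) < IZR M / 4)%R).
  { eapply Rle_lt_trans; [apply Htau; lia| exact Ht1]. }
  assert (Hq : forall i, (1 <= i <= L1 + L2)%nat -> i <> 1%nat ->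
     qhat P rt i 1 = (N / P 1%nat) * Gam P 1 i - (N / P i) * Gam P i 1).
  { intros i Hi Hi1. unfold qhat, Gam, mgcd. apply one_index; auto.
    pose proof (Htau i Hi) as Hti.
    assert (Hgp : 0 < Z.gcd (P 1%nat) (P i)) by (apply (gam_facts _ _ HP1p (HP i Hi))).
    destruct (le_lt_dec i L1) as [Hle|Hlt].
    - assert (HMg : M <= Z.gcd (P 1%nat) (P i)).
      { apply Z.divide_pos_le; auto. apply Z.gcd_greatest; apply HMd; lia. }
      apply IZR_le in HMg. specialize (Ht2 i ltac:(lia)). lra.
    - assert (HMg : M * M' <= Z.gcd (P 1%nat) (P i)).
      { apply Z.divide_pos_le; auto. apply Z.gcd_greatest; auto. }
      apply IZR_le in HMg. rewrite mult_IZR in HMg. specialize (Ht3 i ltac:(lia)). lra. }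
  assert (HGam : forall i, (1 <= i <= L1 + L2)%nat -> i <> 1%nat ->
     0 < Gam P i 1 /\ 0 < Gam P 1 i /\ exists g, 0 < g /\ P i = Gam P i 1 * g /\ P 1%nat = Gam P 1 i * g).
  { intros i Hi Hi1. unfold Gam, mgcd.
    destruct (gam_facts _ _ HP1p (HP i Hi)) as [A1 [B1 C1]].
    destruct (gam_facts _ _ (HP i Hi) HP1p) as [A2 [B2 C2]].
    rewrite Z.gcd_comm in B2, C2 |- *. split; auto. split; auto.
    exists (Z.gcd (P 1%nat) (P i)). auto. }
  assert (Hdiv : forall i, (1 <= i <= L1 + L2)%nat -> i <> 1%nat ->
      (Gam P i 1 | N / P 1%nat - xihat P rt Gbar i 1)).
  { intros i Hi Hi1. destruct (HGam i Hi Hi1) as [Ga [Gb _]].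
    destruct (Hinv i Hi Hi1) as [k Hk].
    unfold xihat. rewrite (Hq i Hi Hi1). rewrite Z.mod_eq by lia.
    set (X := (N / P 1%nat * Gam P 1 i - N / P i * Gam P i 1) * Gbar i).
    exists (N / P i * Gbar i - N / P 1%nat * k + X / Gam P i 1).
    unfold X. set (Y := (N / P 1%nat * Gam P 1 i - N / P i * Gam P i 1) * Gbar i / Gam P i 1).
    assert (N / P 1%nat * (Gam P 1 i * Gbar i - 1 - k * Gam P i 1) = 0) by (rewrite Hk; ring).
    nia. }
  split; [split; [|split]|].
  - rewrite Hnh by lia. apply Z.div_pos; lia.
  - intros i Hi Hi1. rewrite Hnh by lia. auto.
  - intros y Hy Hy2. rewrite Hnh by lia.
    destruct (Z_lt_le_dec y (N / P 1%nat)) as [Hlt|]; [exfalso|lia].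
    set (D := N / P 1%nat - y).
    assert (Hdvd : (lcm_upto P (L1 + L2) | D * P 1%nat)).
    { apply lcm_upto_dvd. intros j Hj.
      destruct (Nat.eq_dec j 1) as [->|Hj1].
      - exists D; ring.
      - destruct (HGam j Hj Hj1) as [Ga [Gb [g [Hg [E1 E2]]]]].
        assert (HD : (Gam P j 1 | D)).
        { unfold D. replace (N / P 1%nat - y) with
            ((N / P 1%nat - xihat P rt Gbar j 1) - (y - xihat P rt Gbar j 1)) by ring.
          apply Z.divide_sub_r; auto. }
        destruct HD as [t Ht]. exists (t * Gam P 1 j). rewrite Ht, E1, E2. ring. }
    assert (HDpos : 0 < D * P 1%nat) by (unfold D; nia).
    apply Z.divide_pos_le in Hdvd; auto.
    assert (D * P 1%nat <= N).
    { pose proof (Z.mod_pos_bound N (P 1%nat) HP1p).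
      pose proof (Z.div_mod N (P 1%nat) ltac:(lia)). unfold D. nia. }
    lia.
  - intros i Hi Hi1. rewrite !Hnh by lia. rewrite (Hq i Hi Hi1).
    destruct (HGam i Hi Hi1) as [Ga _].
    replace (N / P 1%nat * Gam P 1 i - (N / P 1%nat * Gam P 1 i - N / P i * Gam P i 1))
      with (N / P i * Gam P i 1) by ring.
    rewrite Z.div_mul; lia.
Qed.
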